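(* Let $\mathcal A$ be a unital algebra with unit $\mathbf 1$ and let $(\mathbf R_n)_{n\in\mathbb Z}$ be invertible elements of $\mathcal A$ satisfying $$\mathbf R_{n+1}\mathbf R_n^{-1}\mathbf R_{n-1}=\mathbf R_n+\mathbf R_n^{-1}\qquad(n\in\mathbb Z).$$ Then $\mathbf C:=\mathbf R_{n+1}^{-1}\mathbf R_n\mathbf R_{n+1}\mathbf R_n^{-1}$ is independent of $n$, and $$\mathbf K:=(\mathbf R_{n+1}+\mathbf C\mathbf R_{n-1})\mathbf R_n^{-1}=\mathbf R_n^{-1}(\mathbf R_{n+1}\mathbf C+\mathbf R_{n-1})$$ (the two expressions being equal for each $n$) is also independent of $n$. *)

(* Defs.v *)
From HB Require Import structures.
From mathcomp Require Import all_boot all_order all_algebra.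
Set Implicit Arguments. Unset Strict Implicit. Unset Printing Implicit Defensive.
Import Order.TTheory GRing.Theory Num.Theory.
Local Open Scope ring_scope.

Definition Cseq (A : unitRingType) (R : int -> A) (n : int) : A :=
  (R (n + 1))^-1 * R n * R (n + 1) * (R n)^-1.

Definition Kseq (A : unitRingType) (R : int -> A) (n : int) : A :=
  (R (n + 1) + Cseq R n * R (n - 1)) * (R n)^-1.

Definition Kseq' (A : unitRingType) (R : int -> A) (n : int) : A :=
  (R n)^-1 * (R (n + 1) * Cseq R n + R (n - 1)).

(* Main.v *)
Require Import Defs.
From HB Require Import structures.
From mathcomp Require Import all_boot all_order all_algebra.
Import GRing.Theory.
Local Open Scope ring_scope.

Section Alg.
Variable A : unitRingType.

Lemma F1 (a b c : A) : a \is a GRing.unit -> c * b^-1 * a = b + b^-1 ->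
  c * b^-1 = (b + b^-1) * a^-1.
Proof. by move=> ua H; rewrite -H -mulrA mulrV // mulr1. Qed.

Lemma F2 (a b c : A) : c \is a GRing.unit -> c * b^-1 * a = b + b^-1 ->
  b^-1 * a = c^-1 * (b + b^-1).
Proof. by move=> uc H; rewrite -H -!mulrA mulKr. Qed.

Lemma Xcomm (b : A) : b \is a GRing.unit -> b * (b + b^-1) = (b + b^-1) * b.
Proof. by move=> ub; rewrite mulrDr mulrDl mulrV // mulVr. Qed.

Lemma keyC (a b c : A) : a \is a GRing.unit -> b \is a GRing.unit -> c \is a GRing.unit ->
  c * b^-1 * a = b + b^-1 -> c^-1 * b * c * b^-1 = b^-1 * a * b * a^-1.
Proof.
move=> ua ub uc H.
rewrite -(mulrA _ c) (F1 _ _ _ ua H) (F2 _ _ _ uc H) -!mulrA; congr (_ * _).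
by rewrite !mulrA Xcomm.
Qed.

Lemma keyK (a b c : A) : a \is a GRing.unit -> b \is a GRing.unit -> c \is a GRing.unit ->
  c * b^-1 * a = b + b^-1 ->
  (c + c^-1 * b * c * b^-1 * a) * b^-1 = c * b^-1 + b^-1 * a /\
  b^-1 * (c * (c^-1 * b * c * b^-1) + a) = c * b^-1 + b^-1 * a.
Proof.
move=> ua ub uc H; split.
  rewrite mulrDl; congr (_ + _).
  rewrite -(mulrA _ c) (F1 _ _ _ ua H) -!mulrA mulKr // (F2 _ _ _ uc H).
  by rewrite !mulrA -(mulrA _ b) Xcomm // mulrA mulrK.
rewrite mulrDr; congr (_ + _).
by rewrite !mulrA mulrK // mulVr // mul1r.
Qed.

Lemma keyK2 (a b c d : A) : b \is a GRing.unit -> c \is a GRing.unit ->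
  c * b^-1 * a = b + b^-1 -> d * c^-1 * b = c + c^-1 ->
  d * c^-1 + c^-1 * b = c * b^-1 + b^-1 * a.
Proof.
move=> ub uc H1 H2.
rewrite (F1 _ _ _ ub H2) (F2 _ _ _ uc H1) mulrDl mulrDr -addrA; congr (_ + _).
by rewrite addrC.
Qed.
End Alg.

Lemma const_int (T : Type) (f : int -> T) : (forall n, f (n+1) = f n) -> forall n, f n = f 0.
Proof.
move=> h [k|k].
  elim: k => // k IH.
  have -> : Posz k.+1 = (k%:Z + 1)%R by rewrite -addn1 PoszD.
  by rewrite h.
elim: k => [|k IH].
  by rewrite -(h (Negz 0)).
rewrite -IH -(h (Negz k.+1)); congr f.
by rewrite !NegzE -[k.+2]addn1 PoszD opprD addrNK.
Qed.

Theorem mainTheorem11 (A : unitRingType) (R : int -> A)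
  (hunit : forall n : int, R n \is a GRing.unit)
  (hrec : forall n : int, R (n + 1) * (R n)^-1 * R (n - 1) = R n + (R n)^-1) :
  (forall n : int, Cseq R n = Cseq R 0) /\
  (forall n : int, Kseq R n = Kseq' R n) /\
  (forall n : int, Kseq R n = Kseq R 0).
Proof.
have KF : forall n, Kseq R n = R (n+1) * (R n)^-1 + (R n)^-1 * R (n - 1) /\
                    Kseq' R n = R (n+1) * (R n)^-1 + (R n)^-1 * R (n - 1).
  by move=> n; exact: keyK (hunit _) (hunit _) (hunit _) (hrec n).
split; last split.
- apply: const_int => n; rewrite /Cseq.
  have H := hrec (n+1); rewrite addrK in H.
  exact: (keyC _ _ _ _ (hunit n) (hunit (n+1)) (hunit (n+1+1)) H).
- by move=> n; rewrite (proj1 (KF n)) (proj2 (KF n)).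
- apply: const_int => n; rewrite (proj1 (KF n)) (proj1 (KF (n+1))) addrK.
  apply: keyK2; [exact: hunit|exact: hunit|exact: hrec|].
  by have := hrec (n+1); rewrite addrK.
Qed.
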